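(* Let $\mathcal Z=(Z_n)_{n\ge0}$ be an irreducible Markov chain on a finite state space $F$ with transition matrix $R$, and let $N\ge1$. There is a constant $\rho_N$, depending only on $R$ and $N$, such that the following holds for every initial distribution of $\mathcal Z$, all integers $0=k_1<k_2<\dots<k_N<\infty$ (with $k_{N+1}=\infty$), and every measurable $\Lambda:F^{\mathbb N_0}\to[0,\infty)$: if $(Z^i_n)_{k_i\le n\le k_{i+1}}$, $i=1,\dots,N$, are $N$ independent stationary Markov chains with transition matrix $R$, and $\tilde{\mathcal Z}=(\tilde Z_n)_{n\ge0}$ is defined by $\tilde Z_n=Z^i_n$ for $k_i\le n<k_{i+1}$, then $$\mathbb E(\Lambda(\mathcal Z))\le\rho_N\,\mathbb E(\Lambda(\tilde{\mathcal Z})).$$ *)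

(* Defs.v *)
From HB Require Import structures.
From mathcomp Require Import all_boot all_order all_algebra.
From mathcomp Require Import all_classical all_reals all_analysis.
Set Implicit Arguments. Unset Strict Implicit. Unset Printing Implicit Defensive.
Import Order.TTheory GRing.Theory Num.Theory.
Local Open Scope classical_set_scope.
Local Open Scope ring_scope.

Section MarkovDefs.
Variables (R : realType) (F : finType).

Definition stochastic (Q : F -> F -> R) : Prop :=
  (forall x y, 0 <= Q x y) /\ (forall x, \sum_(y : F) Q x y = 1).

Fixpoint tpow (Q : F -> F -> R) (n : nat) (x y : F) : R :=
  match n with
  | 0 => (x == y)%:R
  | n'.+1 => \sum_(z : F) tpow Q n' x z * Q z y
  end.

Definition irreducible (Q : F -> F -> R) : Prop :=
  forall x y, exists n, 0 < tpow Q n x y.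

Definition prob_distr (nu : F -> R) : Prop :=
  (forall x, 0 <= nu x) /\ \sum_(x : F) nu x = 1.

Definition stationary_distr (Q : F -> F -> R) (nu : F -> R) : Prop :=
  prob_distr nu /\ forall y, \sum_(x : F) nu x * Q x y = nu y.

(* time window [s, u] (u = None means [s, oo)) *)
Definition in_window (s : nat) (u : option nat) (n : nat) : bool :=
  (s <= n)%N && (if u is Some t then (n <= t)%N else true).

(* X (observed at times n in the window [s,u]) is a Markov chain with
   initial prob_distr nu (at time s) and transition matrix Q, on the
   probability space (Omega, P): the events {X n = x} are measurable and
   the finite-dimensional distributions are the Markov ones. *)
Definition markov_on d (Omega : measurableType d) (P : probability Omega R)
  (X : nat -> Omega -> F) (s : nat) (u : option nat)
  (nu : F -> R) (Q : F -> F -> R) : Prop :=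
  (forall n x, in_window s u n -> measurable [set w | X n w = x]) /\
  (forall (m : nat) (xs : nat -> F), in_window s u (s + m) ->
     P [set w | forall j, (j <= m)%N -> X (s + j) w = xs j] =
     (nu (xs 0%N) * \prod_(j < m) Q (xs j) (xs j.+1))%:E).

(* blocks: chain i (0 <= i < N) lives on [k i, k (i+1)], the last one on [k (N-1), oo) *)
Definition block_end (k : nat -> nat) (N i : nat) : option nat :=
  if (i.+1 < N)%N then Some (k i.+1) else None.

Definition proc_sigma d (Omega : measurableType d) (X : nat -> Omega -> F)
  (s : nat) (u : option nat) : set (set Omega) :=
  <<s [set A | exists n x, in_window s u n /\ A = [set w | X n w = x]] >>.

Definition indep_procs d (Omega : measurableType d) (P : probability Omega R)
  (N : nat) (k : nat -> nat) (Zs : nat -> nat -> Omega -> F) : Prop :=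
  forall A : nat -> set Omega,
    (forall i, (i < N)%N -> proc_sigma (Zs i) (k i) (block_end k N i) (A i)) ->
    P [set w | forall i, (i < N)%N -> A i w] = \big[*%E/1%E]_(i < N) P (A i).

Definition blk (k : nat -> nat) (N n : nat) : nat := \max_(i < N | (k i <= n)%N) i.

Definition glued d (Omega : measurableType d) (k : nat -> nat) (N : nat)
  (Zs : nat -> nat -> Omega -> F) : nat -> Omega -> F :=
  fun n w => Zs (blk k N n) n w.

Definition cyl_sigma : set (set (nat -> F)) :=
  <<s [set A | exists n x, A = [set f : nat -> F | f n = x]] >>.

Definition path_measurable (L : (nat -> F) -> R) : Prop :=
  forall B : set R, measurable B -> cyl_sigma (L @^-1` B).

End MarkovDefs.

(* Main.v *)
Require Import Defs.
From HB Require Import structures.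
From mathcomp Require Import all_boot all_order all_algebra.
From mathcomp Require Import all_classical all_reals all_analysis.
From mathcomp Require Import measurable_realfun.
From mathcomp Require Import zify.
Import Order.TTheory GRing.Theory Num.Theory.
Local Open Scope classical_set_scope.
Local Open Scope ring_scope.
Set Implicit Arguments.
Unset Strict Implicit.

Section PartA.
Variables (R : realType) (F : finType) (Q : F -> F -> R).

Lemma tpow_ge0 : stochastic Q -> forall n x y, 0 <= tpow Q n x y.
Proof.
move=> [Q0 _]; elim=> [|n IH] x y /=; first by rewrite ler0n.
by apply: sumr_ge0 => z _; apply: mulr_ge0.
Qed.

Lemma stat_pow nu : stationary_distr Q nu -> forall n y,
  \sum_x nu x * tpow Q n x y = nu y.
Proof.
move=> [_ st]; elim=> [|n IH] y /=.
  rewrite (bigD1 y) //= eqxx mulr1 big1 ?addr0 // => x /negbTE ->.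
  by rewrite mulr0.
under eq_bigr do rewrite big_distrr /=.
rewrite exchange_big /= -[RHS]st; apply: eq_bigr => z _.
by rewrite -(IH z) big_distrl; apply: eq_bigr => x _; rewrite mulrA.
Qed.

Lemma pos_const : irreducible Q ->
  exists c : R, 0 < c <= 1 /\ forall x y, exists n, c <= tpow Q n x y.
Proof.
move=> irr.
suff [c [c01 Hc]] : exists c : R, 0 < c <= 1 /\
    forall p, p \in index_enum (F * F)%type -> exists n, c <= tpow Q n p.1 p.2.
  by exists c; split=> // x y; apply: (Hc (x, y)); rewrite mem_index_enum.
elim: (index_enum _) => [|p s [c [/andP[c0 c1] Hc]]].
  by exists 1; split=> //; rewrite ltr01 lexx.
have [n0 Hn0] := irr p.1 p.2.
exists (Num.min c (tpow Q n0 p.1 p.2)); split.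
  by rewrite lt_min c0 Hn0 /= ge_min c1.
move=> q; rewrite inE => /orP[/eqP ->|qs].
  by exists n0; rewrite ge_min lexx orbT.
have [n Hn] := Hc q qs; exists n; rewrite ge_min Hn //.
Qed.

Lemma stat_lb : stochastic Q -> irreducible Q ->
  exists delta : R, 0 < delta <= 1 /\
    forall nu, stationary_distr Q nu -> forall y, delta <= nu y.
Proof.
move=> sto irr; have [c [/andP[c0 c1] Hc]] := pos_const irr.
have F0 : (0 : R) < (#|F|.+1)%:R by rewrite ltr0n.
exists (c / (#|F|.+1)%:R); split.
  apply/andP; split; first by rewrite divr_gt0.
  rewrite ler_pdivrMr // mul1r (le_trans c1) // ler1n //.
move=> nu st y; have [[nu0 nu1] _] := st.
have key : forall x, nu x * c <= nu y.
  move=> x; have [n Hn] := Hc x y.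
  rewrite -(@stat_pow nu st n y) (bigD1 x) //=.
  apply: le_trans (_ : nu x * tpow Q n x y <= _).
    by rewrite ler_wpM2l.
  rewrite lerDl; apply: sumr_ge0 => z _; apply: mulr_ge0 => //.
  exact: tpow_ge0.
have : c <= #|F|%:R * nu y.
  have -> : #|F|%:R * nu y = \sum_(x : F) nu y.
    by rewrite sumr_const mulr_natl.
  rewrite -[c]mul1r -nu1 big_distrl /=.
  by apply: ler_sum => x _.
move=> H; rewrite ler_pdivrMr // mulrC.
apply: le_trans H _; apply: ler_wpM2r => //; rewrite ler_nat //.
Qed.
End PartA.

Section Blocks.
Variables (k : nat -> nat) (N : nat).
Hypotheses (N1 : (1 <= N)%N) (k0 : k 0%N = 0%N)
  (kinc : forall i, (i.+1 < N)%N -> (k i < k i.+1)%N).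

Lemma kmono i j : (i <= j)%N -> (j < N)%N -> (k i <= k j)%N.
Proof.
elim: j => [|j IH]; first by rewrite leqn0 => /eqP ->.
rewrite leq_eqVlt => /orP[/eqP -> //|ij] jN.
have jN' : (j < N)%N by lia.
have := IH ij jN'; have := kinc jN; lia.
Qed.

Definition inblk i n := [&& (i < N)%N, (k i <= n)%N &
  (if (i.+1 < N)%N then (n < k i.+1)%N else true)].

Lemma inblk_uniq i j n : inblk i n -> inblk j n -> i = j.
Proof.
wlog : i j / (i <= j)%N.
  move=> H a b; case: (leqP i j) => ij; first exact: H.
  by apply/esym/H => //; lia.
rewrite leq_eqVlt => /orP[/eqP //|ij].
move=> /and3P[iN ki hi] /and3P[jN kj hj].
have i1N : (i.+1 < N)%N by apply: leq_ltn_trans jN.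
rewrite i1N in hi.
have := kmono ij jN; lia.
Qed.

Lemma inblk_ex n : exists i, inblk i n.
Proof.
have ex : exists i, (i < N)%N && (k i <= n)%N by exists 0%N; rewrite N1 k0.
have ub : forall i, (i < N)%N && (k i <= n)%N -> (i <= N)%N.
  by move=> i /andP[iN _]; lia.
case: (ex_maxnP ex ub) => i /andP[iN kin] Hmax.
exists i; rewrite /inblk iN kin /=; case: ifP => // i1N.
rewrite ltnNge; apply/negP => kn.
by have := Hmax i.+1; rewrite i1N kn => /(_ isT); rewrite ltnn.
Qed.

Lemma blkE i n : inblk i n -> blk k N n = i.
Proof.
move=> H; have /and3P[iN kin hi] := H.
apply/eqP; rewrite eqn_leq; apply/andP; split.
  apply/bigmax_leqP => j /= kjn; rewrite leqNgt; apply/negP => ij.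
  have i1N : (i.+1 < N)%N by apply: leq_ltn_trans (ltn_ord j).
  rewrite i1N in hi; have := kmono ij (ltn_ord j); lia.
by apply: (leq_bigmax_cond (Ordinal iN)).
Qed.

Lemma blk_inblk n : inblk (blk k N n) n.
Proof. by have [i H] := inblk_ex n; rewrite (blkE H). Qed.

Lemma blk_eq i n : (blk k N n == i) = inblk i n.
Proof.
apply/eqP/idP => [<-|]; [exact: blk_inblk | exact: blkE].
Qed.

Definition len i m := ((if (i.+1 < N)%N then minn (k i.+1).-1 m else m) - k i)%N.

Lemma len_spec i m j : (k i <= m)%N ->
  (j < len i m)%N = (k i + j < m)%N && (if (i.+1 < N)%N then (k i + j).+1 < k i.+1 else true)%N.
Proof.
rewrite /len; case: ifP => h km; last by rewrite andbT; lia.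
have := kinc h; lia.
Qed.

Lemma len_window i m : (i < N)%N -> (k i <= m)%N ->
  in_window (k i) (block_end k N i) (k i + len i m) /\ (k i + len i m <= m)%N.
Proof.
rewrite /in_window /block_end /len => iN km; case: ifP => h.
  by have := kinc h; split; [apply/andP; split|]; lia.
by split; [apply/andP; split|]; lia.
Qed.

Variable (R : realType).
Definition cb i n := (blk k N n == i) && (blk k N n.+1 == i).

Lemma prod_shift (q : nat -> R) a L m : (a + L <= m)%N ->
  \prod_(j < L) q (a + j)%N = \prod_(n < m | (a <= n)%N && (n < a + L)%N) q n.
Proof.
elim: L => [|L IH] aLm.
  by rewrite big_ord0 big1 // => n; rewrite addn0 => /andP[an na]; exfalso; lia.
rewrite big_ord_recr /= IH; last by lia.
have aLm' : (a + L < m)%N by lia.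
rewrite [RHS](bigD1 (Ordinal aLm')) /=; last by apply/andP; split; lia.
rewrite mulrC; congr (_ * _); apply: eq_bigl => n.
rewrite -(inj_eq val_inj) /=.
apply/idP/idP; lia.
Qed.

Lemma cb_char i n : (i < N)%N ->
  cb i n = (k i <= n)%N && (if (i.+1 < N)%N then (n.+1 < k i.+1)%N else true).
Proof.
move=> iN; rewrite /cb !blk_eq /inblk iN /=; case: ifP => h.
  by have := kinc h; move=> ?; apply/idP/idP; lia.
by apply/idP/idP; lia.
Qed.

Lemma block_prod (q : nat -> R) i m : (i < N)%N -> (k i <= m)%N ->
  \prod_(j < len i m) q (k i + j)%N = \prod_(n < m | cb i n) q n.
Proof.
move=> iN km; rewrite (prod_shift q (len_window iN km).2).
apply: eq_bigl => n; rewrite cb_char //.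
have := ltn_ord n; rewrite /len; case: ifP => h.
  by have := kinc h; move=> *; apply/idP/idP; lia.
by move=> *; apply/idP/idP; lia.
Qed.

Lemma block_prod_out (q : nat -> R) i m : (m <= k i)%N -> \prod_(n < m | cb i n) q n = 1.
Proof.
move=> mk; apply: big1 => n /andP[/eqP h _].
have := blk_inblk n; rewrite h => /and3P[_ kn _]; exfalso.
have := ltn_ord n; lia.
Qed.

Lemma prod_blocks (q : nat -> R) m : (forall n, 0 <= q n <= 1) ->
  \prod_(n < m) q n <= \prod_(i < N) \prod_(n < m | cb i n) q n.
Proof.
move=> q01.
rewrite (exchange_big_dep xpredT) //=.
apply: ler_prod => n _; have /andP[q0 q1] := q01 n; rewrite q0 /=.
have /and3P[bN _ _] := blk_inblk n.
case h: (blk k N n.+1 == blk k N n).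
  rewrite (bigD1 (Ordinal bN)) /=; last by rewrite /cb eqxx h.
  rewrite big1 ?mulr1 // => i; rewrite /cb /= => /andP[/andP[/eqP e _] ne].
  by exfalso; move/eqP: ne; apply; apply: val_inj; rewrite /= e.
rewrite big1 // => i; rewrite /cb /= => /andP[/eqP e1 /eqP e2].
by move: h; rewrite e1 e2 eqxx.
Qed.
End Blocks.

Lemma sigma_fin_inter (T : Type) (G : set (set T)) (P : nat -> T -> Prop) L :
  (forall j, (j <= L)%N -> <<s G>> [set w | P j w]) ->
  <<s G>> [set w | forall j, (j <= L)%N -> P j w].
Proof.
move=> HP; have := @smallest_sigma_algebra T setT G; case=> _ HC HU.
have -> : [set w | forall j, (j <= L)%N -> P j w] =
  setT `\` \bigcup_j (if (j <= L)%N then setT `\` [set w | P j w] else set0).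
  apply/seteqP; split => w /=.
    move=> H; split => // -[j _]; case: ifP => // jL [_]; apply; exact: H.
  move=> [_ H] j jL; apply: contrapT => nP; apply: H; exists j => //.
  by rewrite jL.
apply: (HC); apply: (HU) => j; case: ifP => jL.
  by apply: (HC); apply: HP.
exact: sigma_algebra0.
Qed.

Lemma sigmaT (T : Type) (G : set (set T)) : <<s G>> setT.
Proof.
have := @smallest_sigma_algebra T setT G; case=> G0 HC _.
by have := HC _ G0; rewrite setD0.
Qed.

Section PartB.
Variables (R : realType) (F : finType) (Q : F -> F -> R).
Variables (delta : R) (d0 : 0 < delta) (d1 : delta <= 1).
Hypothesis Hd : forall nu, stationary_distr Q nu -> forall y, delta <= nu y.
Hypothesis sto : stochastic Q.
Variables (k : nat -> nat) (N : nat).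
Hypotheses (N1 : (1 <= N)%N) (k0 : k 0%N = 0%N)
  (kinc : forall i, (i.+1 < N)%N -> (k i < k i.+1)%N).
Variables (d2 : measure_display) (Omega2 : measurableType d2)
  (P2 : probability Omega2 R) (Zs : nat -> nat -> Omega2 -> F).
Hypothesis HM : forall i, (i < N)%N -> exists nu, stationary_distr Q nu /\
        markov_on P2 (Zs i) (k i) (block_end k N i) nu Q.
Hypothesis Hind : indep_procs P2 N k Zs.

Lemma cyl_glued (z : nat -> F) m :
  ((delta ^+ N * \prod_(n < m) Q (z n) (z n.+1))%:E <=
    P2 [set w | forall j, (j <= m)%N -> glued k N Zs j w = z j])%E.
Proof.
pose qq n := Q (z n) (z n.+1).
pose A i := if (k i <= m)%N then
   [set w | forall j, (j <= len k N i m)%N -> Zs i (k i + j)%N w = z (k i + j)%N]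
   else setT.
have Aeq : [set w | forall j, (j <= m)%N -> glued k N Zs j w = z j] =
    [set w | forall i, (i < N)%N -> A i w].
  apply/seteqP; split => w /=.
    move=> H i iN; rewrite /A; case: ifP => // km j jl.
    have [win le] := len_window N1 k0 kinc iN km.
    rewrite -H; last by lia.
    rewrite /glued (blkE N1 k0 kinc (i := i)) //.
    rewrite /inblk iN /=; apply/andP; split; first by lia.
    case: ifP => // h; have := kinc h; move: jl; rewrite /len h; lia.
  move=> H j jm; rewrite /glued.
  have /and3P[iN kj hj] := blk_inblk N1 k0 kinc j.
  have := H _ iN; rewrite /A ifT; last by lia.
  move=> /(_ (j - k (blk k N j))%N); rewrite subnKC //; apply.
  move: hj; rewrite /len; case: ifP => h; [have := kinc h|]; lia.
have Aproc : forall i, (i < N)%N -> proc_sigma (Zs i) (k i) (block_end k N i) (A i).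
  move=> i iN; rewrite /proc_sigma /A; case: ifP => km.
    apply: sigma_fin_inter => j jl; apply: sub_sigma_algebra.
    exists (k i + j)%N, (z (k i + j)%N); split => //.
    have [win _] := len_window N1 k0 kinc iN km.
    move: win jl; rewrite /in_window /block_end; case: ifP => h; lia.
  exact: sigmaT.
rewrite Aeq (Hind Aproc).
have Q01 : forall x y, 0 <= Q x y <= 1.
  move=> x y; have [Q0 Q1] := sto; rewrite Q0 /= -(Q1 x) (bigD1 y) //= lerDl.
  by apply: sumr_ge0.
have Ai : forall i, (i < N)%N -> P2 (A i) = (fine (P2 (A i)))%:E /\
   delta * \prod_(n < m | cb k N i n) qq n <= fine (P2 (A i)).
  move=> i iN; rewrite /A; case: ifP => km.
    have [nu [st [_ Hmk]]] := HM iN.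
    have [win _] := len_window N1 k0 kinc iN km.
    rewrite (Hmk (len k N i m) (fun j => z (k i + j)%N) win) /=; split => //.
    rewrite -(block_prod N1 k0 kinc qq iN km).
    apply: ler_pM; first exact: ltW.
        by apply: prodr_ge0 => j _; case/andP: (Q01 (z (k i + j)%N) (z (k i + j).+1)).
      exact: Hd.
    apply: ler_prod => j _; rewrite /qq addnS lexx andbT.
    by case/andP: (Q01 (z (k i + j)%N) (z (k i + j).+1)).
  rewrite probability_setT; split => //=.
  rewrite (block_prod_out N1 k0 kinc) ?mulr1 //; lia.
rewrite (eq_bigr (fun i : 'I_N => (fine (P2 (A i)))%:E)); last first.
  by move=> i _; exact: (Ai i (ltn_ord i)).1.
rewrite prodEFin lee_fin.
apply: le_trans (_ : \prod_(i < N) (delta * \prod_(n < m | cb k N i n) qq n) <= _).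
  rewrite big_split /= prodr_const card_ord.
  apply: ler_wpM2l; first by apply: exprn_ge0; apply: ltW.
  by apply: (prod_blocks N1 k0 kinc) => n; apply: Q01.
apply: ler_prod => i _; apply/andP; split; last exact: (Ai i (ltn_ord i)).2.
apply: mulr_ge0; first exact: ltW.
by apply: prodr_ge0 => n _; case/andP: (Q01 (z n) (z n.+1)).
Qed.
End PartB.

Definition ptT {T : Type} (a : T) := T.
HB.instance Definition _ (T : Type) (a : T) := gen_eqMixin (@ptT T a).
HB.instance Definition _ (T : Type) (a : T) := gen_choiceMixin (@ptT T a).
HB.instance Definition _ (T : Type) (a : T) := isPointed.Build (@ptT T a) a.

Section PartC.
Variables (R : realType) (F : finType) (a : nat -> F).
Local Notation T := (@ptT (nat -> F) a).
Definition Gc : set (set T) := [set A | exists n x, A = [set f : T | f n = x]].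
Local Notation M := (g_sigma_algebraType Gc).

Lemma measurable_M (A : set M) : measurable A = <<s Gc>> A.
Proof. by []. Qed.

Lemma pm_meas (L : (nat -> F) -> R) : path_measurable L ->
  measurable_fun [set: M] ((fun f : M => (L f)%:E) : M -> \bar R).
Proof.
move=> HL; apply/(measurable_EFinP _ (L : M -> R)).
move=> _ B mB; rewrite setTI; exact: HL.
Qed.

Lemma phi_meas d (Omega : measurableType d) (X : nat -> Omega -> F) :
  (forall n x, measurable [set w | X n w = x]) ->
  measurable_fun [set: Omega] ((fun w n => X n w) : Omega -> M).
Proof.
move=> HX; apply: (@measurability _ _ _ (g_sigma_algebraType Gc) _ _ Gc) => //.
by move=> _ [B [n [x ->]] <-]; rewrite setTI; exact: HX.
Qed.

Definition Cset : set (set T) := [set A | exists m, forall f g : T,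
  (forall j, (j <= m)%N -> f j = g j) -> A f -> A g].

Lemma CsetT : Cset setT.
Proof. by exists 0%N. Qed.

Lemma Gc_Cset : Gc `<=` Cset.
Proof.
move=> _ [n [x ->]]; exists n => f g H /= <-; apply/esym/H; exact: leqnn.
Qed.

Lemma Cset_ring : setring Cset.
Proof.
split.
- by exists 0%N.
- move=> A B [m1 H1] [m2 H2]; exists (maxn m1 m2) => f g H [Af|Bf].
    by left; apply: (H1 f) => // j jm; apply: H; rewrite leq_max jm.
  by right; apply: (H2 f) => // j jm; apply: H; rewrite leq_max jm orbT.
- move=> A B [m1 H1] [m2 H2]; exists (maxn m1 m2) => f g H [Af nBf]; split.
    by apply: (H1 f) => // j jm; apply: H; rewrite leq_max jm.
  move=> Bg; apply: nBf; apply: (H2 g) => // j jm; apply/esym/H.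
  by rewrite leq_max jm orbT.
Qed.

Definition rst m (f : nat -> F) : {ffun 'I_m.+1 -> F} := [ffun j : 'I_m.+1 => f j].

Lemma rstE m p (f : nat -> F) :
  rst m f = p <-> forall j, (j <= m)%N -> f j = p (inord j).
Proof.
split.
  by move=> <- j jm; rewrite /rst ffunE inordK.
move=> H; apply/ffunP => j; rewrite ffunE H ?inord_val //.
by have := ltn_ord j.
Qed.

Lemma rst_meas m p : measurable ([set f : T | rst m f = p] : set M).
Proof.
have -> : [set f : T | rst m f = p] = [set f : T | forall j, (j <= m)%N -> f j = p (inord j)].
  by apply/seteqP; split => f /= /rstE.
rewrite measurable_M; apply: sigma_fin_inter => j _; apply: sub_sigma_algebra.
by exists j, (p (inord j)).
Qed.

Lemma rstin_meas m (s : seq {ffun 'I_m.+1 -> F}) :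
  measurable ([set f : T | rst m f \in s] : set M).
Proof.
elim: s => [|p s IH].
  by have -> : [set f : T | rst m f \in [::]] = set0 by apply/seteqP; split.
have -> : [set f : T | rst m f \in p :: s] =
    [set f : T | rst m f = p] `|` [set f : T | rst m f \in s].
  apply/seteqP; split => f /=; rewrite inE.
    by case/orP => [/eqP|]; [left|right].
  by case => [->|->]; rewrite ?eqxx ?orbT.
by apply: measurableU => //; exact: rst_meas.
Qed.

Lemma Cset_repr A : Cset A -> exists m (s : seq {ffun 'I_m.+1 -> F}),
  A = [set f : T | rst m f \in s].
Proof.
move=> [m H]; exists m.
exists [seq p <- index_enum {ffun 'I_m.+1 -> F} | `[< exists f : T, A f /\ rst m f = p >]].
apply/seteqP; split => f /=.
  by move=> Af; rewrite mem_filter mem_index_enum andbT; apply/asboolP; exists f.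
rewrite mem_filter => /andP[/asboolP [g [Ag gf]] _].
apply: (H g) => // j jm.
have := gf; move/rstE => /(_ j jm) ->.
by apply/esym; have : rst m f = rst m f by []; move/rstE => /(_ j jm).
Qed.

Lemma Cset_meas A : Cset A -> measurable (A : set M).
Proof. by move=> /Cset_repr [m [s ->]]; exact: rstin_meas. Qed.

Lemma mono_class (m1 m3 : {measure set M -> \bar R}) :
  (forall A, measurable A -> (m1 A < +oo)%E) ->
  (forall A, measurable A -> (m3 A < +oo)%E) ->
  (forall A, Cset A -> (m1 A <= m3 A)%E) ->
  forall A, measurable A -> (m1 A <= m3 A)%E.
Proof.
move=> f1 f3 HC.
pose D := [set A : set T | measurable (A : set M) /\ (m1 A <= m3 A)%E].
have monoD : monotone D.
  split.
  - move=> G ndG DG; have mG i : measurable (G i : set M) := (DG i).1.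
    have mU : measurable (\bigcup_i G i : set M) by apply: bigcupT_measurable.
    split => //.
    have c1 := nondecreasing_cvg_mu (mu := m1) mG mU ndG.
    have c3 := nondecreasing_cvg_mu (mu := m3) mG mU ndG.
    rewrite -(cvg_lim _ c1) // -(cvg_lim _ c3) //.
    apply: lee_lim; [by apply/cvg_ex; eexists; exact: c1
                    |by apply/cvg_ex; eexists; exact: c3|].
    by apply: nearW => n; exact: (DG n).2.
  - move=> G niG DG; have mG i : measurable (G i : set M) := (DG i).1.
    have mU : measurable (\bigcap_i G i : set M) by apply: bigcapT_measurable.
    split => //.
    have c1 := nonincreasing_cvg_mu (f1 _ (mG 0%N)) mG mU niG.
    have c3 := nonincreasing_cvg_mu (f3 _ (mG 0%N)) mG mU niG.
    rewrite -(cvg_lim _ c1) // -(cvg_lim _ c3) //.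
    apply: lee_lim; [by apply/cvg_ex; eexists; exact: c1
                    |by apply/cvg_ex; eexists; exact: c3|].
    by apply: nearW => n; exact: (DG n).2.
have sub : <<sr Cset>> `<=` D.
  apply: monotone_setring_sub_g_sigma_ring monoD Cset_ring _.
  by move=> A CA; split; [exact: Cset_meas|exact: HC].
move=> A mA; suff : <<sr Cset>> A by move=> /sub [].

have : <<s Gc>> A := mA.
apply: smallest_sub; last by move=> B /Gc_Cset; apply: sub_g_sigma_ring.
have [s0 sD sU] := smallest_sigma_ring Cset; split => //.
by move=> B sB; apply: sD => //; apply: sub_g_sigma_ring; exact: CsetT.
Qed.
End PartC.

Section PartD.
Variables (R : realType) (F : finType) (a : nat -> F).
Local Notation T := (@ptT (nat -> F) a).
Local Notation M := (g_sigma_algebraType (@Gc F a)).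
Variables (d1 d2 : measure_display) (O1 : measurableType d1) (O2 : measurableType d2)
  (P1 : probability O1 R) (P2 : probability O2 R)
  (X1 : nat -> O1 -> F) (X2 : nat -> O2 -> F) (rho : R) (rho0 : 0 <= rho).
Hypotheses (HX1 : forall n x, measurable [set w | X1 n w = x])
  (HX2 : forall n x, measurable [set w | X2 n w = x]).
Hypothesis Hcyl : forall m (z : nat -> F),
  (P1 [set w | forall j, (j <= m)%N -> X1 j w = z j] <=
   rho%:E * P2 [set w | forall j, (j <= m)%N -> X2 j w = z j])%E.

Let phi1 : O1 -> M := fun w n => X1 n w.
Let phi2 : O2 -> M := fun w n => X2 n w.
Let mphi1 : measurable_fun setT phi1 := phi_meas HX1.
Let mphi2 : measurable_fun setT phi2 := phi_meas HX2.

Let pm1 (B : set M) : measurable B -> measurable (phi1 @^-1` B).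
Proof. by move=> mB; rewrite -[_ @^-1` _]setTI; apply: mphi1. Qed.
Let pm2 (B : set M) : measurable B -> measurable (phi2 @^-1` B).
Proof. by move=> mB; rewrite -[_ @^-1` _]setTI; apply: mphi2. Qed.

Lemma U_ineq m (s : seq {ffun 'I_m.+1 -> F}) : uniq s ->
  (P1 (phi1 @^-1` [set f : T | rst m f \in s]) <=
   rho%:E * P2 (phi2 @^-1` [set f : T | rst m f \in s]))%E.
Proof.
elim: s => [|p s IH] /=.
  move=> _; have -> : [set f : T | rst m f \in [::]] = set0 by apply/seteqP; split.
  by rewrite !preimage_set0 !measure0 mule0.
move=> /andP[ps us].
have -> : [set f : T | rst m f \in p :: s] =
    [set f : T | rst m f = p] `|` [set f : T | rst m f \in s].
  apply/seteqP; split => f /=; rewrite inE.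
    by case/orP => [/eqP|]; [left|right].
  by case => [->|->]; rewrite ?eqxx ?orbT.
have disj : [set f : T | rst m f = p] `&` [set f : T | rst m f \in s] = set0.
  by apply/seteqP; split => // f /= [-> pin]; move: ps; rewrite pin.
have d1' : phi1 @^-1` [set f : T | rst m f = p] `&` phi1 @^-1` [set f : T | rst m f \in s] = set0.
  by rewrite -preimage_setI disj preimage_set0.
have d2' : phi2 @^-1` [set f : T | rst m f = p] `&` phi2 @^-1` [set f : T | rst m f \in s] = set0.
  by rewrite -preimage_setI disj preimage_set0.
rewrite !preimage_setU.
rewrite (measureU P1 (pm1 (rst_meas (a:=a) p)) (pm1 (rstin_meas (a:=a) s)) d1').
rewrite (measureU P2 (pm2 (rst_meas (a:=a) p)) (pm2 (rstin_meas (a:=a) s)) d2').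
rewrite ge0_muleDr //; apply: leeD; last exact: IH.
have E1 : phi1 @^-1` [set f : T | rst m f = p] =
  [set w | forall j, (j <= m)%N -> X1 j w = p (inord j)].
  by apply/seteqP; split => w /= /rstE.
have E2 : phi2 @^-1` [set f : T | rst m f = p] =
  [set w | forall j, (j <= m)%N -> X2 j w = p (inord j)].
  by apply/seteqP; split => w /= /rstE.
by rewrite E1 E2; apply: Hcyl.
Qed.

Lemma Cset_ineq A : Cset A ->
  (P1 (phi1 @^-1` A) <= rho%:E * P2 (phi2 @^-1` A))%E.
Proof.
move=> /Cset_repr [m [s ->]].
have -> : [set f : T | rst m f \in s] = [set f : T | rst m f \in undup s].
  by apply/seteqP; split => f /=; rewrite mem_undup.
exact/U_ineq/undup_uniq.
Qed.


Lemma compare (L : (nat -> F) -> R) : path_measurable L -> (forall f, 0 <= L f) ->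
  (\int[P1]_w (L (fun n => X1 n w))%:E <= rho%:E * \int[P2]_w (L (fun n => X2 n w))%:E)%E.
Proof.
move=> HL L0.
have mL := pm_meas (a := a) HL.
have L0' : {in setT, forall y : M, (0 <= (L y)%:E)%E} by move=> y _; rewrite lee_fin.
have E1 := ge0_integral_pushforward mphi1 P1 measurableT mL L0'.
have E2 := ge0_integral_pushforward mphi2 P2 measurableT mL L0'.
rewrite preimage_setT in E1; rewrite preimage_setT in E2.
rewrite -E1 -E2.
rewrite -(ge0_integral_mscale _ measurableT (NngNum rho0) mL); last by move=> y _; rewrite lee_fin.
apply: ge0_le_measure_integral => //.
apply: mono_class.
- move=> A mA /=; rewrite /pushforward.
  by apply: le_lt_trans (probability_le1 _ (pm1 mA)) _; rewrite ltry.
- move=> A mA /=; rewrite /mscale /pushforward /=.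
  apply: le_lt_trans (lee_wpmul2l _ (probability_le1 _ (pm2 mA))) _.
    by rewrite lee_fin.
  by rewrite mule1 ltry.
- by move=> A CA /=; rewrite /mscale /pushforward /=; exact: Cset_ineq.
Qed.
End PartD.

Unset Implicit Arguments.
Theorem lemma5p1 (R : realType) (F : finType) (Q : F -> F -> R) (N : nat) :
  stochastic Q -> irreducible Q -> (1 <= N)%N ->
  exists rho : R,
    forall (d1 : measure_display) (Omega1 : measurableType d1)
      (P1 : probability Omega1 R) (mu : F -> R) (Z : nat -> Omega1 -> F),
    prob_distr mu -> markov_on P1 Z 0 None mu Q ->
    forall k : nat -> nat, k 0%N = 0%N ->
      (forall i, (i.+1 < N)%N -> (k i < k i.+1)%N) ->
    forall (d2 : measure_display) (Omega2 : measurableType d2)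
      (P2 : probability Omega2 R) (Zs : nat -> nat -> Omega2 -> F),
    (forall i, (i < N)%N -> exists nu, stationary_distr Q nu /\
        markov_on P2 (Zs i) (k i) (block_end k N i) nu Q) ->
    indep_procs P2 N k Zs ->
    forall L : (nat -> F) -> R, path_measurable L -> (forall f, 0 <= L f) ->
    (\int[P1]_w (L (fun n => Z n w))%:E <=
       rho%:E * \int[P2]_w (L (fun n => glued k N Zs n w))%:E)%E.
Proof.
move=> sto irr N1.
have [delta [/andP[d0 d1] Hd]] := stat_lb sto irr.
exists (delta ^+ N)^-1.
move=> d1' Omega1 P1 mu Z pmu HZ k k0 kinc d2 Omega2 P2 Zs HM Hind L HL L0.
have rho0 : 0 <= (delta ^+ N)^-1 by rewrite invr_ge0 exprn_ge0 // ltW.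
pose a := fun n => Z n (point : Omega1).
apply: (compare a (X1 := Z) (X2 := fun n w => glued k N Zs n w) rho0) => //.
- by move=> n x; apply: HZ.1.
- move=> n x; have /and3P[bN kb hb] := blk_inblk N1 k0 kinc n.
  have [nu [_ [Hm _]]] := HM _ bN; apply: Hm.
  rewrite /in_window /block_end kb /=; move: hb; case: ifP => //= _; lia.
move=> m z.
have H1 : P1 [set w | forall j, (j <= m)%N -> Z j w = z j] =
  (mu (z 0%N) * \prod_(j < m) Q (z j) (z j.+1))%:E := HZ.2 m z isT.
rewrite H1.
apply: le_trans (_ : ((delta ^+ N)^-1)%:E *
   (delta ^+ N * \prod_(n < m) Q (z n) (z n.+1))%:E <= _)%E; last first.
  apply: lee_wpmul2l; first by rewrite lee_fin.
  exact: (cyl_glued d0 d1 Hd sto N1 k0 kinc HM Hind z m).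
rewrite -EFinM lee_fin mulrA mulVf ?mul1r; last first.
  by apply: expf_neq0; rewrite gt_eqF.
rewrite -[X in _ <= X]mul1r; apply: ler_wpM2r.
  by apply: prodr_ge0 => j _; case: sto => Q0 _; apply: Q0.
case: pmu => mu0 mu1; rewrite -mu1 (bigD1 (z 0%N)) //= lerDl.
by apply: sumr_ge0.
Qed.
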